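(* Let $(q_n)$ be the Fibonacci Quilt sequence. For all integers $k\ge0$ and $\ell\ge1+5k$ (and $\ell\ge6$ when $k\ge1$), \[ q_\ell+q_{\ell-5}+q_{\ell-10}+\cdots+q_{\ell-5k}<q_{\ell+1}. \]
   Context: Given an increasing sequence of positive integers $(q_i)_{i\ge1}$, an FQ-legal decomposition of an integer $m\ge0$ is an expression $m=q_{\ell_1}+q_{\ell_2}+\cdots+q_{\ell_t}$ ($t\ge0$, the empty sum representing $0$) with distinct indices $\ell_1>\ell_2>\cdots>\ell_t$ such that $|\ell_i-\ell_j|\notin\{1,3,4\}$ for all $i,j$, and $\{1,3\}\not\subset\{\ell_1,\dots,\ell_t\}$. The Fibonacci Quilt sequence is the increasing sequence of positive integers $(q_i)_{i\ge1}$ in which each $q_i$ is the smallest positive integer having no FQ-legal decomposition using only $q_1,\dots,q_{i-1}$. Its first terms are $1,2,3,4,5,7,9,12,16,21,28,37,49,\dots$. *)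

(* Defs.v *)
From mathcomp Require Import all_boot.
Set Implicit Arguments. Unset Strict Implicit. Unset Printing Implicit Defensive.

(* An index set s (a list of indices; order irrelevant) is FQ-legal if its
   indices are distinct, no two differ by 1, 3 or 4, and it does not contain
   both 1 and 3.  (Checking a - b over all ordered pairs with truncated
   subtraction covers |a - b|.) *)
Definition FQ_legal (s : seq nat) : bool :=
  [&& uniq s,
      all (fun a => all (fun b => (a - b) \notin [:: 1; 3; 4]) s) s
    & ~~ ((1 \in s) && (3 \in s))].

Fixpoint subsets (s : seq nat) : seq (seq nat) :=
  match s with
  | [::] => [:: [::]]
  | x :: t => let r := subsets t in map (cons x) r ++ r
  end.

(* qs = [:: q_1; ...; q_(i-1)]; has_FQ_decomp qs m holds iff m has an
   FQ-legal decomposition using only q_1, ..., q_(i-1)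
   (index j refers to q_j = nth 0 qs j.-1). *)
Definition has_FQ_decomp (qs : seq nat) (m : nat) : bool :=
  has (fun s => FQ_legal s && (sumn (map (fun j => nth 0 qs j.-1) s) == m))
      (subsets (iota 1 (size qs))).

(* The smallest positive integer with no FQ-legal decomposition using qs.
   The search range 1 .. (sumn qs).+1 suffices: (sumn qs).+1 exceeds every
   decomposition sum, so it is never decomposable. *)
Definition FQ_next (qs : seq nat) : nat :=
  let S := sumn qs in
  nth S.+1 [seq m <- iota 1 S.+1 | ~~ has_FQ_decomp qs m] 0.

Fixpoint FQ_prefix (n : nat) : seq nat :=
  match n with
  | 0 => [::]
  | n'.+1 => let p := FQ_prefix n' in rcons p (FQ_next p)
  end.

(* The Fibonacci Quilt sequence, 1-indexed: fq i = q_i for i >= 1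
   (fq 0 = 0 is an unused dummy value). *)
Definition fq (i : nat) : nat := last 0 (FQ_prefix i).

Lemma fq_first_terms :
  map fq (iota 1 13) = [:: 1; 2; 3; 4; 5; 7; 9; 12; 16; 21; 28; 37; 49].
Proof. by vm_compute. Qed.

(* Main.v *)
Require Import Defs.
From mathcomp Require Import all_boot zify.
Set Implicit Arguments. Unset Strict Implicit.

Lemma size_FQp n : size (FQ_prefix n) = n.
Proof. by elim: n => //= n IH; rewrite size_rcons IH. Qed.

Lemma fqS n : fq n.+1 = FQ_next (FQ_prefix n).
Proof. by rewrite /fq /= last_rcons. Qed.

Lemma nth_prefix n i : i < n -> nth 0 (FQ_prefix n) i = fq i.+1.
Proof.
elim: n => // n IH Hi; rewrite /= nth_rcons size_FQp.
case: (ltnP i n) => H; first by rewrite IH.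
have -> : i = n by lia.
by rewrite eqxx fqS.
Qed.

Lemma subsets_sub t s : s \in subsets t -> {subset s <= t}.
Proof.
elim: t s => [|x t IH] s /=; first by rewrite inE => /eqP ->.
rewrite mem_cat => /orP [/mapP [s' Hs' ->] | Hs] y.
  rewrite !inE => /orP [->//| H]; apply/orP; right; exact: (IH _ Hs').
by move/(IH _ Hs) => H; rewrite inE H orbT.
Qed.

Lemma filter_subsets t p : filter p t \in subsets t.
Proof.
elim: t => [|x t IH] /=; first by rewrite inE.
by rewrite mem_cat; case: (p x) => /=; [rewrite map_f | rewrite IH orbT].
Qed.

Lemma subsets_sum f t s : s \in subsets t -> sumn (map f s) <= sumn (map f t).
Proof.
elim: t s => [|x t IH] s /=; first by rewrite inE => /eqP ->.
rewrite mem_cat => /orP [/mapP [s' H ->] | H] /=; first by rewrite leq_add2l IH.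
exact: leq_trans (IH _ H) (leq_addl _ _).
Qed.

Lemma sum_nth qs : sumn (map (fun j => nth 0 qs j.-1) (iota 1 (size qs))) = sumn qs.
Proof.
have -> : iota 1 (size qs) = iota (1 + 0) (size qs) by [].
rewrite iotaDl -map_comp.
rewrite (eq_map (_ : (fun j => nth 0 qs j.-1) \o addn 1 =1 nth 0 qs)) //.
by rewrite -/(mkseq _ _) mkseq_nth.
Qed.

Lemma next_props qs :
  ~~ has_FQ_decomp qs (FQ_next qs) /\
  (forall m, 0 < m < FQ_next qs -> has_FQ_decomp qs m).
Proof.
rewrite /FQ_next. set S := sumn qs.
set f := [seq m <- iota 1 S.+1 | ~~ has_FQ_decomp qs m].
have Hbig : ~~ has_FQ_decomp qs S.+1.
  apply/hasPn => s Hs; apply/negP => /andP [_ /eqP Hsum].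
  by move: (@subsets_sum (fun j => nth 0 qs j.-1) _ _ Hs); rewrite sum_nth Hsum ltnn.
have Hf : forall m, m \in f = (1 <= m <= S.+1) && ~~ has_FQ_decomp qs m.
  by move=> m; rewrite mem_filter mem_iota andbC; congr (_ && _); apply/idP/idP; lia.
case Ef: f => [|y f'] /=.
  split => // m Hm; case: (boolP (has_FQ_decomp qs m)) => // Hn.
  have : m \in f by rewrite Hf Hn andbT; lia.
  by rewrite Ef.
have Hy : y \in f by rewrite Ef inE eqxx.
move: (Hy); rewrite Hf => /andP [Hyr Hyn]; split => // m Hm.
case: (boolP (has_FQ_decomp qs m)) => // Hn.
have : m \in f by rewrite Hf Hn andbT; lia.
have : sorted ltn f by apply: sorted_filter => //; [exact: ltn_trans | exact: iota_ltn_sorted].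
rewrite Ef /= => /(order_path_min ltn_trans) /allP Ha.
rewrite inE => /orP [/eqP E | /Ha]; lia.
Qed.

Definition Lg (s : seq nat) := [/\ uniq s,
  (forall a b, a \in s -> b \in s -> a - b \notin [:: 1; 3; 4]) &
  ~~ ((1 \in s) && (3 \in s))].

Lemma FQ_legalP s : FQ_legal s <-> Lg s.
Proof.
rewrite /FQ_legal; split.
  case/and3P => U /allP A N; split => // a b Ha Hb; exact: (allP (A a Ha) b Hb).
case => U A N; apply/and3P; split => //.
by apply/allP => a Ha; apply/allP => b Hb; exact: A.
Qed.

Definition W s := sumn (map fq s).

Definition D n m := exists s, [/\ Lg s, (forall i, i \in s -> 0 < i <= n) & W s = m].

Lemma Lg_perm s t : perm_eq s t -> Lg s -> Lg t.
Proof.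
move=> Hp [U A N]; split; first by rewrite -(perm_uniq Hp).
  by move=> a b; rewrite -!(perm_mem Hp); exact: A.
by rewrite -!(perm_mem Hp).
Qed.

Lemma W_perm s t : perm_eq s t -> W s = W t.
Proof. by move=> Hp; apply: perm_sumn; apply: perm_map. Qed.

Lemma hasD n m : has_FQ_decomp (FQ_prefix n) m <-> D n m.
Proof.
rewrite /has_FQ_decomp size_FQp; split.
  case/hasP => s Hs /andP [/FQ_legalP L /eqP Hm].
  have Hr : forall i, i \in s -> 0 < i <= n.
    by move=> i Hi; move: (@subsets_sub _ _ Hs _ Hi); rewrite mem_iota; lia.
  exists s; split => //.
  rewrite /W -Hm; congr sumn; apply/eq_in_map => i Hi.
  have := Hr i Hi => Hi'.
  rewrite nth_prefix; last by lia.
  by rewrite prednK //; lia.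
case => s [L R Hm].
set t := [seq i <- iota 1 n | i \in s].
have Hp : perm_eq s t.
  apply: uniq_perm; first by case: L.
    by rewrite filter_uniq // iota_uniq.
  move=> i; rewrite mem_filter mem_iota.
  case Hi: (i \in s) => //=; have := R i Hi; lia.
have Hr : forall i, i \in t -> 0 < i <= n.
  by move=> i; rewrite -(perm_mem Hp); exact: R.
apply/hasP; exists t; first exact: filter_subsets.
apply/andP; split. apply/FQ_legalP. exact: (Lg_perm Hp L).
rewrite -Hm (W_perm Hp) /W; apply/eqP; congr sumn; apply/eq_in_map => i Hi.
have := Hr i Hi => Hi'.
rewrite nth_prefix; last by lia.
by rewrite prednK //; lia.
Qed.

Lemma C1 n : ~ D n (fq n.+1).
Proof.
move/hasD; rewrite fqS; apply/negP; exact: (proj1 (next_props _)).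
Qed.

Lemma C2 n m : 0 < m < fq n.+1 -> D n m.
Proof.
rewrite fqS => H; apply/hasD; exact: (proj2 (next_props _)).
Qed.

Lemma D_mono n n' m : D n m -> n <= n' -> D n' m.
Proof.
case=> s [L R H] Hn; exists s; split => // i Hi; have := R i Hi; lia.
Qed.

Lemma Lg_diff s a b : Lg s -> a \in s -> b \in s ->
  [/\ a - b <> 1, a - b <> 3 & a - b <> 4].
Proof.
case=> _ H _ Ha Hb; move: (H a b Ha Hb); rewrite !inE.
by case/norP => /eqP ? /norP [/eqP ? /eqP ?].
Qed.

Lemma Lg_filter s p : Lg s -> Lg (filter p s).
Proof.
case=> U A N; split; first by rewrite filter_uniq.
  by move=> a b; rewrite !mem_filter => /andP [_ Ha] /andP [_ Hb]; exact: A.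
rewrite !mem_filter; apply: contra N => /andP [/andP [_ ->] /andP [_ ->]] //.
Qed.

Lemma W_split s j : uniq s -> j \in s -> W s = fq j + W (filter (fun i => i != j) s).
Proof.
move=> U Hj.
rewrite -(W_perm (permEl (perm_filterC (pred1 j) s))) /W map_cat sumn_cat.
by rewrite filter_pred1_uniq //= addn0.
Qed.

Lemma Lg_cons s n : Lg s -> (forall b, b \in s -> b + 5 <= n) -> n != 1 -> n != 3 ->
  Lg (n :: s).
Proof.
move=> [U A N] Hb H1 H3; split.
- rewrite /= U andbT; apply/negP => /Hb; lia.
- move=> a b; rewrite !inE => /orP [/eqP -> | Ha] /orP [/eqP -> | Hbs].
  + by rewrite subnn.
  + have := Hb b Hbs => ?; apply/negP; lia.
  + have := Hb a Ha => ?; apply/negP; lia.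
  + by move: (A a b Ha Hbs); rewrite !inE.
- by rewrite !inE eq_sym (negbTE H1) eq_sym (negbTE H3).
Qed.

Lemma Lg_nil : Lg [::].
Proof. by split. Qed.


Lemma fq0 : fq 0 = 0. Proof. by vm_compute. Qed.
Lemma fq1 : fq 1 = 1. Proof. by vm_compute. Qed.
Lemma fq2 : fq 2 = 2. Proof. by vm_compute. Qed.
Lemma fq3 : fq 3 = 3. Proof. by vm_compute. Qed.
Lemma fq4 : fq 4 = 4. Proof. by vm_compute. Qed.
Lemma fq5 : fq 5 = 5. Proof. by vm_compute. Qed.
Lemma fq6 : fq 6 = 7. Proof. by vm_compute. Qed.
Lemma fq7 : fq 7 = 9. Proof. by vm_compute. Qed.
Lemma fq8 : fq 8 = 12. Proof. by vm_compute. Qed.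
Lemma fq9 : fq 9 = 16. Proof. by vm_compute. Qed.

Opaque fq.

Definition HR N := forall i, 5 <= i <= N -> fq i = fq (i - 2) + fq (i - 3).

Lemma HR7 : HR 7.
Proof.
move=> i Hi; have : [|| i == 5, i == 6 | i == 7] by lia.
by case/or3P => /eqP ->; rewrite ?fq0 ?fq1 ?fq2 ?fq3 ?fq4 ?fq5 ?fq6 ?fq7.
Qed.

Lemma HRle N M : HR N -> M <= N -> HR M.
Proof. by move=> H HM i Hi; apply: H; lia. Qed.

Ltac fqs := rewrite ?fq0 ?fq1 ?fq2 ?fq3 ?fq4 ?fq5 ?fq6 ?fq7 ?fq8 ?fq9.

Lemma mono N : HR N -> forall i, i < N -> fq i < fq i.+1.
Proof.
move=> H; elim/ltn_ind => i IH Hi.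
case: (ltnP i 7) => Hi7.
  have : [|| i == 0, i == 1, i == 2, i == 3, i == 4, i == 5 | i == 6] by lia.
  by case/or4P => [/eqP->|/eqP->|/eqP->|/or4P [/eqP->|/eqP->|/eqP->|/eqP->]]; fqs.
have E1 := H i.+1 ltac:(lia).
have E2 := H i ltac:(lia).
have I1 := IH (i - 3) ltac:(lia) ltac:(lia).
have I2 := IH (i - 2) ltac:(lia) ltac:(lia).
rewrite (_ : (i - 3).+1 = i - 2) in I1; last by lia.
rewrite (_ : (i - 2).+1 = i.+1 - 2) in I2; last by lia.
rewrite (_ : i.+1 - 3 = i - 2) in E1; last by lia.
lia.
Qed.

Lemma mono_le N : HR N -> forall i j, i <= j -> j <= N -> fq i <= fq j.
Proof.
move=> H i j; elim: j => [|j IH] Hij HjN; first by have -> : i = 0 by lia.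
case: (ltnP i j.+1) => Hl; last by have -> : i = j.+1 by lia.
have := mono H (i:=j) ltac:(lia); have := IH ltac:(lia) ltac:(lia); lia.
Qed.

Lemma mono_lt N : HR N -> forall i j, i < j -> j <= N -> fq i < fq j.
Proof.
move=> H i j Hij HjN; have := mono H (i:=i) ltac:(lia).
have := mono_le H (i:=i.+1) (j:=j) Hij HjN; lia.
Qed.

Global Opaque fq.

Lemma F1 N : HR N -> forall j, j < N -> 0 < j -> fq (j - 5).+1 + fq (j - 5) <= fq j.+1.
Proof.
move=> H j HjN Hj0; case: (ltnP j 7) => Hj7.
  have : [|| j == 1, j == 2, j == 3, j == 4, j == 5 | j == 6] by lia.
  by case/or4P => [/eqP->|/eqP->|/eqP->|/or3P [/eqP->|/eqP->|/eqP->]]; fqs.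
have E := H (j - 2) ltac:(lia).
rewrite (_ : j - 2 - 2 = (j - 5).+1) in E; last by lia.
rewrite (_ : j - 2 - 3 = j - 5) in E; last by lia.
have := mono_le H (i := j - 2) (j := j.+1) ltac:(lia) ltac:(lia); lia.
Qed.

Lemma F2 N : HR N -> forall j, j < N -> 3 <= j ->
  fq (j - 2) + fq (j - 7).+1 + fq (j - 7) <= fq j.+1.
Proof.
move=> H j HjN Hj3; case: (ltnP j 9) => Hj9.
  have : [|| j == 3, j == 4, j == 5, j == 6, j == 7 | j == 8] by lia.
  by case/or4P => [/eqP->|/eqP->|/eqP->|/or3P [/eqP->|/eqP->|/eqP->]]; fqs.
have E := H (j - 4) ltac:(lia).
rewrite (_ : j - 4 - 2 = (j - 7).+1) in E; last by lia.
rewrite (_ : j - 4 - 3 = j - 7) in E; last by lia.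
have E2 := H j.+1 ltac:(lia).
rewrite (_ : j.+1 - 2 = j - 1) in E2; last by lia.
rewrite (_ : j.+1 - 3 = j - 2) in E2; last by lia.
have := mono_le H (i := j - 4) (j := j - 1) ltac:(lia) ltac:(lia); lia.
Qed.

Lemma W_ge s j : uniq s -> j \in s -> fq j <= W s.
Proof. by move=> U Hj; rewrite (W_split U Hj) leq_addr. Qed.

Lemma bound N : HR N -> forall j, j < N -> forall s, Lg s ->
  (forall i, i \in s -> 0 < i <= j) -> W s < fq j.+1 + fq j.
Proof.
move=> H; elim/ltn_ind => j IH HjN s Ls Hs.
case: (posnP j) => [Hj0 | Hjpos].
  have -> : s = [::].
    by case: s Ls Hs => // x s' _ /(_ x (mem_head _ _)); rewrite Hj0; lia.
  by rewrite Hj0 /W /= fq1.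
case: (boolP (j \in s)) => Hj.
  have U : uniq s by case: Ls.
  rewrite (W_split U Hj).
  set s1 := filter (fun i => i != j) s.
  have L1 : Lg s1 by apply: Lg_filter.
  have U1 : uniq s1 by case: L1.
  have Hs1 : forall i, i \in s1 -> [/\ 0 < i, i + 2 <= j, i + 3 <> j & i + 4 <> j].
    move=> i; rewrite mem_filter => /andP [Hij Hi].
    move: (Hs i Hi) Hij; have [? ? ?] := Lg_diff Ls Hj Hi; move=> ? /eqP ?; split; lia.
  case: (boolP (j - 2 \in s1)) => Hj2.
    have Hj3 : 3 <= j by case: (Hs1 _ Hj2) => *; lia.
    rewrite (W_split U1 Hj2).
    set s2 := filter (fun i => i != j - 2) s1.
    have L2 : Lg s2 by apply: Lg_filter.
    have Hs2 : forall i, i \in s2 -> 0 < i <= j - 7.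
      move=> i; rewrite mem_filter => /andP [Hij Hi].
      move: (Hs1 i Hi) Hij; have [? ? ?] := Lg_diff L1 Hj2 Hi; case=> ? ? ? ? /eqP ?; lia.
    have := IH (j - 7) ltac:(lia) ltac:(lia) s2 L2 Hs2.
    have := F2 H HjN Hj3; have := mono H HjN; lia.
  have Hs1' : forall i, i \in s1 -> 0 < i <= j - 5.
    move=> i Hi; have := Hs1 i Hi; move: Hj2 => /negP Hn.
    case=> ? ? ? ?; case: (eqVneq i (j - 2)) => [E|]; last lia.
    by exfalso; apply: Hn; rewrite -E.
  have := IH (j - 5) ltac:(lia) ltac:(lia) s1 L1 Hs1'.
  have := F1 H HjN Hjpos; have := mono H HjN; lia.
have Hs' : forall i, i \in s -> 0 < i <= j.-1.
  move=> i Hi; have := Hs i Hi; case: (eqVneq i j) => [E|]; last lia.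
  by move: Hj; rewrite -E Hi.
have := IH j.-1 ltac:(lia) ltac:(lia) s Ls Hs'.
rewrite prednK //.
have := mono H HjN; have := mono H (i := j.-1) ltac:(lia); rewrite prednK //; lia.
Qed.

Lemma step N : 7 <= N -> HR N -> fq N.+1 = fq (N - 1) + fq (N - 2).
Proof.
move=> HN H.
have E1 := H N ltac:(lia).
have E2 := H (N - 1) ltac:(lia).
rewrite (_ : N - 1 - 2 = N - 3) in E2; last by lia.
rewrite (_ : N - 1 - 3 = N - 4) in E2; last by lia.
set T := fq (N - 1) + fq (N - 2).
have ET : T = fq N + fq (N - 4) by rewrite /T; lia.
have M42 : fq (N - 4) < fq (N - 2) by apply: (mono_lt H); lia.
have Ha : forall m, 0 < m < T -> D N m.
  move=> m Hm; case: (ltnP m (fq N)) => HmN.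
    apply: (@D_mono (N - 1)); last by lia.
    apply: C2; rewrite (_ : (N - 1).+1 = N) //; lia.
  case: (posnP (m - fq N)) => Hm0.
    exists [:: N]; split.
    - apply: Lg_cons; [exact: Lg_nil | by [] | apply/eqP; lia | apply/eqP; lia].
    - by move=> i; rewrite inE => /eqP ->; lia.
    - rewrite /W /=; lia.
  have [s [Ls Hs Ws]] : D (N - 5) (m - fq N).
    by apply: C2; rewrite (_ : (N - 5).+1 = N - 4); lia.
  exists (N :: s); split.
  - apply: Lg_cons; [exact: Ls | move=> b /Hs; lia | apply/eqP; lia | apply/eqP; lia].
  - move=> i; rewrite inE => /orP [/eqP -> | /Hs]; lia.
  - rewrite /W /= -/(W s) Ws; lia.
have Hb : ~ D N T.
  case=> s [Ls Hs Ws]; have U : uniq s by case: Ls.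
  case: (boolP (N \in s)) => HNs.
    set s1 := filter (fun i => i != N) s.
    have {}Ws : fq N + W s1 = T by rewrite -Ws (W_split U HNs).
    have L1 : Lg s1 by apply: Lg_filter.
    have U1 : uniq s1 by case: L1.
    have W1 : W s1 = fq (N - 4) by lia.
    case: (boolP (N - 2 \in s1)) => H2.
      by move: (W_ge U1 H2); lia.
    apply: (C1 (n := N - 5)); rewrite (_ : (N - 5).+1 = N - 4); last by lia.
    exists s1; split => // i Hi.
    move: Hi H2; rewrite mem_filter => /andP [/eqP Hij Hi] H2.
    have [? ? ?] := Lg_diff Ls HNs Hi.
    have := Hs i Hi => Hr.
    case: (eqVneq i (N - 2)) => [E|]; last by lia.
    by move: H2; rewrite -E mem_filter Hi andbT; move/negP; case; apply/eqP.
  case: (boolP (N - 1 \in s)) => HN1.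
    set s1 := filter (fun i => i != N - 1) s.
    have {}Ws : fq (N - 1) + W s1 = T by rewrite -Ws (W_split U HN1).
    have L1 : Lg s1 by apply: Lg_filter.
    apply: (C1 (n := N - 3)); rewrite (_ : (N - 3).+1 = N - 2); last by lia.
    exists s1; split => //; last by rewrite /T in Ws; lia.
    move=> i; rewrite mem_filter => /andP [/eqP Hij Hi].
    have [? ? ?] := Lg_diff Ls HN1 Hi.
    have := Hs i Hi => Hr.
    case: (eqVneq i N) => [E|]; last by lia.
    by move: HNs; rewrite -E Hi.
  have Hs' : forall i, i \in s -> 0 < i <= N - 2.
    move=> i Hi; have := Hs i Hi.
    case: (eqVneq i N) => [E|]; first by move: HNs; rewrite -E Hi.
    case: (eqVneq i (N - 1)) => [E|]; first by move: HN1; rewrite -E Hi.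
    lia.
  have := bound H (j := N - 2) ltac:(lia) Ls Hs'.
  rewrite (_ : (N - 2).+1 = N - 1); last by lia.
  rewrite -/T Ws ltnn //.
have Cx := @C1 N.
have Cy := fun m => @C2 N m.
case: (ltngtP (fq N.+1) T) => // Hc.
- exfalso; apply: Cx.
  case: (posnP (fq N.+1)) => Hp.
    by rewrite Hp; exists [::]; split => //; exact: Lg_nil.
  by apply: Ha; lia.
- by exfalso; apply: Hb; apply: Cy; lia.
Qed.

Lemma HR_all N : 7 <= N -> HR N.
Proof.
elim: N => [|N IH] HN; first by [].
case: (ltnP N 7) => HN7.
  have -> : N.+1 = 7 by lia.
  exact: HR7.
have H := IH HN7.
move=> i Hi; case: (ltnP i N.+1) => Hi'; first by apply: H; lia.
have -> : i = N.+1 by lia.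
by rewrite step.
Qed.

Lemma rec i : 5 <= i -> fq i = fq (i - 2) + fq (i - 3).
Proof. move=> Hi; apply: (HR_all (N := maxn i 7)); lia. Qed.

Lemma fq_lt i : fq i < fq i.+1.
Proof. apply: (mono (HR_all (N := maxn i.+1 7) _)); lia. Qed.

Unset Implicit Arguments.

Theorem mainTheorem15 (k l : nat) :
  1 + 5 * k <= l -> (1 <= k -> 6 <= l) ->
  \sum_(0 <= i < k.+1) fq (l - 5 * i) < fq l.+1.
Proof.
elim: k l => [|k IH] l H1 H2.
  by rewrite big_nat1 muln0 subn0 fq_lt.
rewrite big_nat_recl //.
rewrite (eq_bigr (fun i => fq (l - 5 - 5 * i))); last first.
  by move=> i _; rewrite mulnS subnDA.
have Hl : 6 <= l by apply: H2; lia.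
have := IH (l - 5) ltac:(lia) ltac:(lia).
rewrite (_ : (l - 5).+1 = l - 4); last by lia.
have E1 := rec (i := l.+1) ltac:(lia).
have E2 := rec (i := l) ltac:(lia).
have E3 := rec (i := l - 1) ltac:(lia).
rewrite (_ : l.+1 - 2 = l - 1) in E1; last by lia.
rewrite (_ : l.+1 - 3 = l - 2) in E1; last by lia.
rewrite (_ : l - 1 - 2 = l - 3) in E3; last by lia.
rewrite (_ : l - 1 - 3 = l - 4) in E3; last by lia.
rewrite muln0 subn0; lia.
Qed.
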